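(* Let $n\ge1$, $\mathbf{A}=\{a_1,\dots,a_n\}$, and let $\mathbf{S}_2^n=\{XY : X,Y\in\mathbf{A}^*\setminus\{\emptyset\},\ \overline{\nu}(X)=\overline{\nu}(Y)\}$. Then no minimal crucial word with respect to $\mathbf{S}_2^n$ contains three distinct letters each of which occurs exactly twice in the word.
   Context: A word over $\mathbf{A}$ is a finite sequence of letters; $\mathbf{A}^*$ is the set of all words. A subword is a block of consecutive letters. For a word $X$, the content vector is $\overline{\nu}(X)=(\nu_1(X),\dots,\nu_n(X))$, where $\nu_i(X)$ is the number of occurrences of $a_i$ in $X$. For $\mathbf{S}\subseteq\mathbf{A}^*$, a word is free from $\mathbf{S}$ if none of its subwords belongs to $\mathbf{S}$. A word $X$ free from $\mathbf{S}$ is crucial with respect to $\mathbf{S}$ if for every letter $a\in\mathbf{A}$ the word $Xa$ contains a subword belonging to $\mathbf{S}$. A minimal crucial word is a crucial word of smallest possible length. *)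

(* Defs.v *)
From mathcomp Require Import all_boot.
Set Implicit Arguments. Unset Strict Implicit. Unset Printing Implicit Defensive.

Definition word (n : nat) := seq 'I_n.

(* content vector: nu_i(X) = count_mem i X *)
Definition content_eq (n : nat) (X Y : word n) : Prop :=
  forall a : 'I_n, count_mem a X = count_mem a Y.

Definition in_S2 (n : nat) (w : word n) : Prop :=
  exists X Y : word n, X <> [::] /\ Y <> [::] /\ w = X ++ Y /\ content_eq X Y.

Definition has_S2_subword (n : nat) (w : word n) : Prop :=
  exists u : word n, infix u w /\ in_S2 u.

Definition free_S2 (n : nat) (w : word n) : Prop := ~ has_S2_subword w.

Definition crucial_S2 (n : nat) (w : word n) : Prop :=
  free_S2 w /\ forall a : 'I_n, has_S2_subword (rcons w a).

Definition minimal_crucial_S2 (n : nat) (w : word n) : Prop :=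
  crucial_S2 w /\ forall v : word n, crucial_S2 v -> size w <= size v.

(* Main.v *)
Require Import Defs.
From mathcomp Require Import all_boot zify.
Set Implicit Arguments. Unset Strict Implicit. Unset Printing Implicit Defensive.

Definition gsq (T : eqType) (u : seq T) :=
  exists X Y : seq T, X <> [::] /\ Y <> [::] /\ u = X ++ Y /\ perm_eq X Y.
Definition gfree (T : eqType) (w : seq T) := forall u, infix u w -> ~ gsq u.

Lemma perm_counts (T : eqType) (s t : seq T) :
  (forall x, count_mem x s = count_mem x t) -> perm_eq s t.
Proof. by move=> H; apply/allP => x _; apply/eqP; apply: H. Qed.

Lemma gsq_even (T : eqType) (u : seq T) a : gsq u -> ~~ odd (count_mem a u).
Proof.
case=> X [Y [_ [_ [-> pXY]]]]; rewrite count_cat.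
by move/permP: pXY => ->; rewrite addnn odd_double.
Qed.

Lemma gsq_size (T : eqType) (u : seq T) : gsq u -> 2 <= size u.
Proof.
case=> X [Y [hX [hY [-> _]]]]; rewrite size_cat.
case: X hX => [/(_ erefl)//|? ? _]; case: Y hY => [/(_ erefl)//|? ? _].
by rewrite /= addnS.
Qed.

Lemma gsq_uniq (T : eqType) (u : seq T) : gsq u -> ~~ uniq u.
Proof.
move=> sq; apply/negP => uu.
have := gsq_size sq; case: u sq uu => // a u sq uu _.
have := gsq_even a sq; rewrite count_uniq_mem // inE eqxx.
by [].
Qed.

Lemma gfree_small (T : eqType) (w : seq T) : size w <= 1 -> gfree w.
Proof.
move=> hw u iu sq; have := gsq_size sq; have := size_infix iu; lia.
Qed.

Lemma gfree_uniq (T : eqType) (w : seq T) : uniq w -> gfree w.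
Proof. by move=> uw u iu sq; move: (gsq_uniq sq); rewrite (infix_uniq iu uw). Qed.

Lemma prefix_split (T : eqType) (x y u : seq T) c :
  prefix u (x ++ c :: y) ->
  prefix u x \/ exists y1, u = x ++ c :: y1 /\ prefix y1 y.
Proof.
elim: x u => [|b x IH] [|a u] //=; try by left.
  by case/andP=> /eqP-> pu; right; exists u.
case/andP=> /eqP-> /IH [pu|[y1 [-> py]]]; first by left; rewrite eqxx.
by right; exists y1.
Qed.

Lemma infix_split (T : eqType) (x y u : seq T) c :
  infix u (x ++ c :: y) ->
  [\/ infix u x, infix u y |
   exists x2 y1, [/\ u = x2 ++ c :: y1, suffix x2 x & prefix y1 y]].
Proof.
elim: x => [|b x IH] /=.
  case/orP=> [|iu]; last by constructor 2.
  case: u => [|a u] //=; first by constructor 1.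
  case/andP=> /eqP-> pu; constructor 3; exists [::], u; split=> //.
case/orP=> [pu|].
  case: (@prefix_split _ (b :: x) _ _ _ pu) => [p|[y1 [-> py]]].
    by constructor 1; move: (prefixW p).
  by constructor 3; exists (b :: x), y1; split=> //; exact: suffix_refl.
case/IH=> [iu|iu|[x2 [y1 [-> sx py]]]].
- by constructor 1; rewrite /= iu orbT.
- by constructor 2.
constructor 3; exists x2, y1; split=> //.
exact: (suffix_trans sx (suffix_cons _ _)).
Qed.

Lemma count_suffix (T : eqType) (x2 x : seq T) a :
  suffix x2 x -> count_mem a x2 <= count_mem a x.
Proof. by case/suffixP=> p ->; rewrite count_cat leq_addl. Qed.

Lemma count_prefix (T : eqType) (x2 x : seq T) a :
  prefix x2 x -> count_mem a x2 <= count_mem a x.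
Proof. by case/prefixP=> p ->; rewrite count_cat leq_addr. Qed.

Lemma gfree_single (T : eqType) (x y : seq T) c :
  c \notin x -> c \notin y -> gfree x -> gfree y -> gfree (x ++ c :: y).
Proof.
move=> cx cy fx fy u /infix_split [iu|iu|[x2 [y1 [-> sx py]]]] sq.
- exact: fx iu sq.
- exact: fy iu sq.
have := gsq_even c sq; rewrite count_cat /= eqxx.
have := count_suffix c sx; have := count_prefix c py.
move/count_memPn: cx => ->; move/count_memPn: cy => ->.
rewrite !leqn0 => /eqP-> /eqP->; by [].
Qed.

Lemma infix_map (T U : eqType) (f : T -> U) (u s : seq T) :
  infix u s -> infix (map f u) (map f s).
Proof. by case/infixP=> p [q ->]; apply/infixP; exists (map f p), (map f q); rewrite !map_cat. Qed.


Definition cnt (T : eqType) (w : seq T) y t := count_mem y (drop (size w - t) w).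

Lemma content_perm n (X Y : word n) : content_eq X Y -> perm_eq X Y.
Proof. by move=> H; apply: perm_counts. Qed.

Lemma perm_content n (X Y : word n) : perm_eq X Y -> content_eq X Y.
Proof. by move/permP=> H a; apply: H. Qed.

Lemma count_drop (T : eqType) (s : seq T) k y : count_mem y (drop k s) <= count_mem y s.
Proof. by rewrite -[in X in _ <= X](cat_take_drop k s) count_cat leq_addl. Qed.

Lemma cnt_mono (T : eqType) (w : seq T) y t1 t2 : t1 <= t2 -> cnt w y t1 <= cnt w y t2.
Proof.
move=> le; rewrite /cnt.
have -> : size w - t1 = (size w - t1 - (size w - t2)) + (size w - t2) by lia.
by rewrite -drop_drop count_drop.
Qed.

Lemma cnt_le (T : eqType) (w : seq T) y t : cnt w y t <= count_mem y w.
Proof.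
exact: count_drop.
Qed.

Lemma cnt_full (T : eqType) (w : seq T) y t : size w <= t -> cnt w y t = count_mem y w.
Proof. by move=> h; rewrite /cnt (_ : size w - t = 0) ?drop0 //; lia. Qed.

Lemma sq_suffix n (w : word n) x : free_S2 w -> has_S2_subword (rcons w x) ->
  exists h, 2 * h + 1 <= size w /\ forall y, cnt w y (2 * h + 1) = 2 * cnt w y h + (x == y).
Proof.
move=> fw [u [iu su]].
move/infixP: iu => [s [s' E]].
case/lastP: s' E => [|s2 e] E; last first.
  exfalso; apply: fw; exists u; split=> //.
  move: E; rewrite -!rcons_cat => /rcons_inj [-> _].
  by apply/infixP; exists s, s2.
case: su => [X [Y [hX [hY [eu ce]]]]].
move/content_perm: ce => pe.
move: E; rewrite cats0 eu.
case/lastP: Y hY pe eu => [/(_ erefl)//|Y' e] _ pe eu.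
rewrite -!rcons_cat => /rcons_inj [Ew Ex].
have sz : size X = (size Y').+1 by rewrite (perm_size pe) size_rcons.
exists (size Y'); split.
  by rewrite Ew !size_cat; lia.
move=> y.
have d1 : drop (size w - size Y') w = Y'.
  by rewrite Ew catA drop_size_cat // !size_cat; lia.
have d2 : drop (size w - (2 * size Y' + 1)) w = X ++ Y'.
  by rewrite Ew drop_size_cat // !size_cat; lia.
rewrite /cnt d1 d2 count_cat (permP pe) -cats1 count_cat /= Ex addn0; lia.
Qed.


Definition Ehyp (T : eqType) (w : seq T) (h : T -> nat) :=
  forall x y, cnt w y (2 * h x + 1) = 2 * cnt w y (h x) + (x == y).

Lemma h_lt (T : eqType) (w : seq T) h z y : Ehyp w h -> (forall y, h y <= h z) ->
  y != z -> h y < h z.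
Proof.
move=> E M yz; rewrite ltn_neqAle M andbT; apply/negP => /eqP e.
have := E y y; have := E z y; rewrite e eqxx eq_sym (negbTE yz).
lia.
Qed.

Lemma h_inj (T : eqType) (w : seq T) h y y' : Ehyp w h -> y != y' -> h y != h y'.
Proof.
move=> E yy; apply/negP => /eqP e.
have := E y y; have := E y' y; rewrite e eqxx eq_sym (negbTE yy); lia.
Qed.

Definition sing (T : eqType) (w : seq T) (h : T -> nat) z y :=
  y != z /\ cnt w y (2 * h z + 1) = 2.

Lemma sing_facts (T : eqType) (w : seq T) h z y : Ehyp w h -> (forall y, h y <= h z) ->
  sing w h z y -> [/\ cnt w y (2 * h y + 1) = 1, cnt w y (h y) = 0 & cnt w y (h z) = 1].
Proof.
move=> E M [yz c2].
have m1 : cnt w y (2 * h y + 1) <= cnt w y (2 * h z + 1) by apply: cnt_mono; have := M y; lia.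
have := E y y; have := E z y; rewrite eqxx eq_sym (negbTE yz) => e1 e2; split; lia.
Qed.

Lemma sing_pair (T : eqType) (w : seq T) h z y y' : Ehyp w h -> (forall y, h y <= h z) ->
  sing w h z y -> sing w h z y' -> h y < h y' ->
  h z <= 2 * h y' /\ 2 * h y + 2 <= h z.
Proof.
move=> E M sy sy' lt.
have yy : y != y' by apply/negP => /eqP e; move: lt; rewrite e ltnn.
case: (sing_facts E M sy) => a1 a2 a3; case: (sing_facts E M sy') => b1 b2 b3.
case: sy => _ c2; case: sy' => _ c2'.
split.
  have e1 := E y' y; rewrite eq_sym (negbTE yy) addn0 in e1.
  have m1 : cnt w y (2 * h y + 1) <= cnt w y (2 * h y' + 1) by apply: cnt_mono; lia.
  have m2 : cnt w y (2 * h y' + 1) <= cnt w y (2 * h z + 1) by apply: cnt_mono; have := M y'; lia.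
  rewrite leqNgt; apply/negP => lt2.
  have m3 : cnt w y (2 * h y' + 1) <= cnt w y (h z) by apply: cnt_mono; lia.
  lia.
have e1 := E y y'; rewrite (negbTE yy) addn0 in e1.
have m1 : cnt w y' (2 * h y + 1) <= cnt w y' (2 * h y' + 1) by apply: cnt_mono; lia.
rewrite leqNgt; apply/negP => lt2.
have m3 : cnt w y' (h z) <= cnt w y' (2 * h y + 1) by apply: cnt_mono; lia.
lia.
Qed.

Lemma sing_three (T : eqType) (w : seq T) h z y1 y2 y3 : Ehyp w h -> (forall y, h y <= h z) ->
  sing w h z y1 -> sing w h z y2 -> sing w h z y3 ->
  [/\ y1 != y2, y1 != y3 & y2 != y3] -> False.
Proof.
move=> E M s1 s2 s3 [d12 d13 d23].
have := h_inj E d12; have := h_inj E d13; have := h_inj E d23.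
have P := sing_pair E M.
have p12 := P _ _ s1 s2; have p21 := P _ _ s2 s1; have p13 := P _ _ s1 s3.
have p31 := P _ _ s3 s1; have p23 := P _ _ s2 s3; have p32 := P _ _ s3 s2.
move: p12 p21 p13 p31 p23 p32.
move: (h y1) (h y2) (h y3) (h z) => a b c d; lia.
Qed.


Lemma size_sum_count (T : finType) (s : seq T) : size s = \sum_(y : T) count_mem y s.
Proof.
elim: s => [|x s IH] /=; first by rewrite big1.
rewrite big_split /= -IH (bigD1 x) //= eqxx big1 ?addn0 ?add1n // => y /negbTE.
by rewrite eq_sym => ->.
Qed.

Lemma sum_eq1 (T : finType) (z : T) : \sum_(y : T) (y == z : nat) = 1.
Proof. by rewrite (bigD1 z) //= eqxx big1 // => y /negbTE ->. Qed.

Lemma lower_case n (w : word n) (h : 'I_n -> nat) z b c :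
  Ehyp w h -> (forall y, h y <= h z) -> (forall x, 2 * h x + 1 <= size w) ->
  (forall y, 1 <= cnt w y (2 * h z + 1)) ->
  count_mem z w = 2 -> sing w h z b -> sing w h z c -> b != c ->
  4 * n <= size w + 6.
Proof.
move=> E M S G1 cz sb sc bc.
have zb : b != z by case: sb.
have zc : c != z by case: sc.
have big : 2 * (h z) + 2 <= size w.
  rewrite leqNgt; apply/negP => lt.
  have := E z z; rewrite eqxx (@cnt_full _ w z (2 * h z + 1)); last first.
    have lt' : size w <= 2 * h z + 1 by lia.
    exact: lt'.
  move=> e; lia.
have ge : forall y, 2 <= cnt w y (h z) + 2 * (y == z) + (y == b) + (y == c).
  move=> y.
  case: (eqVneq y z) => [->|yz] /=; first by lia.
  have e := E z y; rewrite eq_sym (negbTE yz) addn0 in e.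
  have g := G1 y.
  case: (eqVneq y b) => [eb|yb] /=; first by subst; lia.
  case: (eqVneq y c) => [ec|yc] /=; first by subst; lia.
  rewrite leqNgt; apply/negP => lt.
  have sy : sing w h z y by split=> //; lia.
  apply: (sing_three E M sb sc sy); split=> //; by rewrite eq_sym.
have sumH : \sum_(y : 'I_n) cnt w y (h z) = (h z).
  rewrite /cnt -size_sum_count size_drop; have := S z; set N := size w; move=> sz; set N2 := size w; lia.
have : \sum_(y : 'I_n) 2 <= \sum_(y : 'I_n) (cnt w y (h z) + 2 * (y == z) + (y == b) + (y == c)).
  by apply: leq_sum => y _; apply: ge.
rewrite !big_split /= sumH !sum_eq1 big1_eq big_const_ord iter_addn_0.
move: big; set N := size w; move=> big; set N2 := size w.
lia.
Qed.

Lemma lower n (w : word n) a b c : crucial_S2 w -> [/\ a != b, a != c & b != c] ->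
  count_mem a w = 2 -> count_mem b w = 2 -> count_mem c w = 2 -> 4 * n <= size w + 6.
Proof.
case=> fw cr [ab ac bc] ca cb cc.
have : forall x : 'I_n, exists hx, 2 * hx + 1 <= size w /\
    forall y, cnt w y (2 * hx + 1) = 2 * cnt w y hx + (x == y).
  by move=> x; apply: sq_suffix.
case/fin_all_exists => h Hh.
have E : Ehyp w h by move=> x y; case: (Hh x).
have S : forall x, 2 * h x + 1 <= size w by move=> x; case: (Hh x).
case: (@arg_maxnP _ a xpredT h isT) => z _ zmax.
have M : forall y, h y <= h z by move=> y; apply: zmax.
have G1 : forall y, 1 <= cnt w y (2 * h z + 1).
  move=> y; have := E y y; rewrite eqxx => e.
  have : cnt w y (2 * h y + 1) <= cnt w y (2 * h z + 1) by apply: cnt_mono; have := M y; lia.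
  lia.
have two : forall y, y != z -> count_mem y w = 2 -> sing w h z y.
  move=> y yz cy; split=> //.
  have := E z y; rewrite eq_sym (negbTE yz) addn0 => e.
  have := cnt_le w y (2 * h z + 1); have := G1 y; move: cy; set C := count_mem y w; move=> cy; set C2 := count_mem y w; lia.
case: (eqVneq a z) => [ea|az].
  subst a.
  have bz : b != z by rewrite eq_sym.
  have cz : c != z by rewrite eq_sym.
  exact: (lower_case E M S G1 ca (two b bz cb) (two c cz cc) bc).
case: (eqVneq b z) => [eb|bz].
  subst b.
  have cz : c != z by rewrite eq_sym.
  exact: (lower_case E M S G1 cb (two a az ca) (two c cz cc) ac).
case: (eqVneq c z) => [ec|cz].
  subst c.
  exact: (lower_case E M S G1 cc (two _ az ca) (two _ bz cb) ab).
exfalso; apply: (sing_three E M (two _ az ca) (two _ bz cb) (two _ cz cc)); split=> //.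
Qed.


Definition pairs a c : seq nat := flatten [seq [:: x.+1; x] | x <- iota a c].

Lemma pairsD a i j : pairs a (i + j) = pairs a i ++ pairs (a + i) j.
Proof. by rewrite /pairs iotaD map_cat flatten_cat. Qed.

Lemma pairsS a c : pairs a c.+1 = pairs a c ++ [:: (a + c).+1; a + c].
Proof. by rewrite -addn1 pairsD /pairs /= ?cats0. Qed.

Lemma size_pairs a c : size (pairs a c) = 2 * c.
Proof. elim: c => [|c IH]; first by []. rewrite pairsS size_cat IH /=; lia. Qed.

Lemma count_iota x a c : count_mem x (iota a c) = (a <= x < a + c).
Proof. by rewrite count_uniq_mem ?iota_uniq // mem_iota. Qed.

Lemma count_pairs x a c : count_mem x (pairs a c) = (a < x <= a + c) + (a <= x < a + c).
Proof.
elim: c => [|c IH]; first by rewrite /=; lia.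
rewrite pairsS count_cat IH /=; lia.
Qed.

Lemma gfree_pairs a c : gfree (pairs a c).
Proof.
elim: c => [|c IH]; first by apply: gfree_small.
rewrite pairsS; apply: gfree_single => //.
- by apply/count_memPn; rewrite count_pairs; lia.
- by rewrite inE; lia.
- by apply: gfree_small.
Qed.

Lemma parity_pairs a c i : odd (count_mem (a + c) (drop i (pairs a c))) ->
  exists j, a <= j < a + c /\ odd (count_mem j (drop i (pairs a c))).
Proof.
elim: c i => [|c IH] i; first by rewrite /pairs /=.
rewrite pairsS drop_cat size_pairs => Hodd.
case: ifP => lt.
  case: (boolP (odd (count_mem (a + c) (drop i (pairs a c))))) => o.
    case: (IH i o) => j [hj oj]; exists j; split; first by lia.
    rewrite count_cat /=.
    have -> : ((a + c).+1 == j) = false by apply/eqP; lia.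
    have -> : ((a + c) == j) = false by apply/eqP; lia.
    by rewrite !addn0.
  exists (a + c); split; first by lia.
  by rewrite count_cat /= eqxx (_ : ((a + c).+1 == a + c) = false) ?addn0 ?addn1 //=; lia.
move: Hodd; rewrite ifF // => Hodd.
case e : (i - 2 * c) => [|[|k]].
  exists (a + c); split; first by lia.
  by rewrite drop0 /= eqxx (_ : ((a + c).+1 == a + c) = false) //; lia.
  by move: Hodd; rewrite e /= (_ : ((a + c) == a + c.+1) = false) //; lia.
by move: Hodd; rewrite e /=.
Qed.

Lemma count_cons (T : Type) (a : pred T) x s : count a (x :: s) = a x + count a s.
Proof. by []. Qed.

Definition Ow k := iota 3 k.+1.
Definition R2 k := Ow k ++ 1 :: (Ow k ++ [:: 2]).
Definition Rk k := (k + 3) :: 2 :: R2 k.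
Definition Wp k := pairs 3 k ++ 1 :: Rk k.
Definition Wk k := 3 :: 0 :: Wp k.

Lemma odd_contra (T : eqType) (u : seq T) a m : gsq u -> count_mem a u = m -> odd m -> False.
Proof. by move=> sq e o; have := gsq_even a sq; rewrite e o. Qed.

Lemma gfree_R2 k : gfree (R2 k).
Proof.
apply: gfree_single.
- by apply/count_memPn; rewrite /Ow count_iota.
- by apply/count_memPn; rewrite count_cat /Ow count_iota.
- by apply: gfree_uniq; rewrite /Ow iota_uniq.
- by apply: gfree_uniq; rewrite cats1 rcons_uniq /Ow iota_uniq mem_iota andbT.
Qed.

Lemma gfree_Wp k : gfree (Wp k).
Proof.
move=> u /infix_split [iu|iu|[x2 [y1 [eu sx py]]]] sq.
- exact: gfree_pairs iu sq.
- move: iu; rewrite (_ : Rk k = [:: k + 3] ++ 2 :: R2 k) //.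
  case/infix_split => [iu|iu|[x3 [y2 [eu sx py]]]].
  + by have := size_infix iu; have := gsq_size sq; rewrite /=; lia.
  + exact: gfree_R2 iu sq.
  have c2x : count_mem 2 x3 = 0.
    by have := count_suffix 2 sx; rewrite /=; lia.
  case: (@prefix_split _ (Ow k) (Ow k ++ [:: 2]) y2 1 py) => [p|[y3 [ey py3]]].
    have c2y : count_mem 2 y2 = 0.
      by have := count_prefix 2 p; rewrite /Ow count_iota; lia.
    apply: (@odd_contra _ u 2 (1) sq) => //.
    by rewrite eu count_cat /= c2x c2y.
  have c1x : count_mem 1 x3 = 0.
    by have := count_suffix 1 sx; rewrite /=; lia.
  have c1y : count_mem 1 y3 = 0.
    by have := count_prefix 1 py3; rewrite count_cat /Ow count_iota /=; lia.
  apply: (@odd_contra _ u 1 (1) sq) => //.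
  by rewrite eu ey count_cat /= count_cat /= c1x c1y /Ow count_iota.
have cx : forall j, j < 3 -> count_mem j x2 = 0.
  move=> j hj; have := count_suffix j sx; rewrite count_pairs; lia.
move: py; rewrite (_ : Rk k = ((k + 3) :: 2 :: Ow k) ++ 1 :: (Ow k ++ [:: 2])) //.
case/prefix_split => [p|[y3 [ey py3]]].
  have c1y : count_mem 1 y1 = 0.
    by have := count_prefix 1 p; rewrite /= /Ow count_iota; lia.
  apply: (@odd_contra _ u 1 (1) sq) => //.
  by rewrite eu count_cat /= c1y cx.
case: (@prefix_split _ (Ow k) [::] y3 2 py3) => [p|[y4 [ey4 py4]]].
  have c2y : count_mem 2 y3 = 0.
    by have := count_prefix 2 p; rewrite /Ow count_iota; lia.
  apply: (@odd_contra _ u 2 (1) sq) => //.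
  rewrite eu ey count_cat /= count_cat /= c2y cx // /Ow count_iota.
  by rewrite (_ : (k + 3 == 2) = false) //; lia.
move: py4; rewrite prefixs0 => /eqP e4; subst y4.
move: sx; rewrite suffixE => /eqP ex2.
have cu : forall j, 3 <= j -> count_mem j u = count_mem j x2 + (k + 3 == j) + 2 * (j < k + 4).
  move=> j hj; rewrite eu ey ey4 /Ow.
  rewrite !(count_cat, count_cons, count_iota) /=; lia.
have ok : odd (count_mem (3 + k) x2).
  have := gsq_even (k + 3) sq; rewrite cu ?eqxx; last by lia.
  rewrite (_ : (k + 3 < k + 4) = true); last by lia.
  by rewrite (addnC 3 k) !oddD /=; case: odd.
rewrite -ex2 in ok.
case: (parity_pairs ok) => j [hj oj].
rewrite ex2 in oj.
apply: (@odd_contra _ u j (count_mem j x2 + 2) sq).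
  rewrite cu; last by lia.
  rewrite (_ : (k + 3 == j) = false); last by apply/eqP; lia.
  by rewrite (_ : (j < k + 4) = true) //; lia.
by rewrite addn2 /= negbK.
Qed.

Lemma gfree_W k : gfree (Wk k).
Proof.
rewrite /Wk (_ : 3 :: 0 :: Wp k = [:: 3] ++ 0 :: Wp k) //.
apply: gfree_single => //.
- apply/count_memPn.
  rewrite /Wp /Rk /R2 /Ow !(count_cat, count_cons, count_iota, count_pairs) /=; lia.
- exact: gfree_small.
- exact: gfree_Wp.
Qed.

Lemma ne0 (T : Type) (s : seq T) : 0 < size s -> s <> [::].
Proof. by case: s. Qed.

Definition sqs (T : eqType) (s : seq T) :=
  exists P X Y : seq T, [/\ X <> [::], Y <> [::], s = P ++ X ++ Y & perm_eq X Y].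

Lemma sq_W k x : x < k + 4 -> sqs (rcons (Wk k) x).
Proof.
move=> hx.
case: x hx => [|[|[|x]]] hx.
- exists [::], (3 :: 0 :: pairs 3 k ++ [:: 1; k + 3; 2]), (Ow k ++ 1 :: Ow k ++ [:: 2; 0]).
  split=> //.
  + by rewrite /Wk /Wp /Rk /R2 -cats1; do 8!(rewrite -?catA /=).
  apply: perm_counts => y.
  rewrite /Ow !(count_cat, count_cons, count_iota, count_pairs) /=; lia.
- exists (3 :: 0 :: pairs 3 k ++ [:: 1; k + 3]), (2 :: Ow k ++ [:: 1]), (Ow k ++ [:: 2; 1]).
  split; try by apply: ne0; rewrite ?size_cat /=; lia.
  + by rewrite /Wk /Wp /Rk /R2 -cats1; do 8!(rewrite -?catA /=).
  apply: perm_counts => y.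
  rewrite /Ow !(count_cat, count_cons, count_iota, count_pairs) /=; lia.
- exists (3 :: 0 :: pairs 3 k ++ 1 :: (k + 3) :: 2 :: Ow k ++ 1 :: Ow k), [:: 2], [:: 2].
  split=> //.
  by rewrite /Wk /Wp /Rk /R2 -cats1; do 8!(rewrite -?catA /=).
have hi : x <= k by lia.
exists (3 :: 0 :: pairs 3 x),
  (pairs (3 + x) (k - x) ++ [:: 1; k + 3; 2] ++ iota 3 x.+1),
  (iota (4 + x) (k - x) ++ 1 :: Ow k ++ [:: 2; x.+3]).
split; try by apply: ne0; rewrite ?size_cat /=; lia.
- have e1 : pairs 3 k = pairs 3 x ++ pairs (3 + x) (k - x) by rewrite -pairsD; congr pairs; lia.
  have e2 : Ow k = iota 3 x.+1 ++ iota (4 + x) (k - x).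
    rewrite /Ow (_ : k.+1 = x.+1 + (k - x)) ?iotaD; last by lia.
    by congr (_ ++ iota _ _); lia.
  rewrite /Wk /Wp /Rk /R2 e1 {1}e2 -cats1; do 10!(rewrite -?catA /=).
  done.
apply: perm_counts => y.
rewrite /Ow !(count_cat, count_cons, count_iota, count_pairs) /=; lia.
Qed.

Lemma all_lt_counts (s : seq nat) m : (forall y, m <= y -> count_mem y s = 0) -> all (fun x => x < m) s.
Proof.
move=> H; apply/allP => y ys; rewrite ltnNge; apply/negP => my.
by move: ys; rewrite -has_pred1 has_count H.
Qed.

Lemma W3_free : gfree [:: 0; 1; 2; 0; 2].
Proof.
rewrite (_ : [:: 0; 1; 2; 0; 2] = [:: 0] ++ 1 :: ([:: 2] ++ 0 :: [:: 2])) //.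
apply: gfree_single => //; first exact: gfree_small.
by apply: gfree_single => //; apply: gfree_small.
Qed.

Lemma construct n : 3 <= n -> exists W : seq nat,
  [/\ size W = 4 * n - 7, all (fun x => x < n) W, gfree W & forall x, x < n -> sqs (rcons W x)].
Proof.
move=> n3.
case: (ltngtP n 3) => [|n4|e]; first by lia.
  exists (Wk (n - 4)); split.
  - rewrite /Wk /Wp /Rk /R2 /Ow /= !size_cat /= size_cat /= !size_iota size_pairs /= size_cat size_iota /=; lia.
  - apply: all_lt_counts => y hy.
    rewrite /Wk /Wp /Rk /R2 /Ow !(count_cat, count_cons, count_iota, count_pairs) /=; lia.
  - exact: gfree_W.
  - by move=> x hx; apply: sq_W; lia.
subst n; exists [:: 0; 1; 2; 0; 2]; split => //; first exact: W3_free.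
case=> [|[|[|]]] // _.
- exists [:: 0; 1], [:: 2; 0], [:: 2; 0]; by split.
- exists [::], [:: 0; 1; 2], [:: 0; 2; 1]; by split.
- exists [:: 0; 1; 2; 0], [:: 2], [:: 2]; by split.
Qed.


Lemma map_ne0 (A B : Type) (f : A -> B) (X : seq A) : X <> [::] -> map f X <> [::].
Proof. by case: X. Qed.

Lemma transfer (n : nat) (W : seq nat) : all (fun x => x < n.+1) W -> gfree W ->
  (forall x, x < n.+1 -> sqs (rcons W x)) -> crucial_S2 (map (@inord n) W).
Proof.
move=> aW fW sW.
have mW : map val (map (@inord n) W) = W.
  rewrite -map_comp; apply: map_id_in => x xW /=.
  by apply: inordK; move/allP: aW => /(_ x xW).
split.
  move=> [u [iu [X [Y [hX [hY [eu ce]]]]]]].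
  apply: (fW (map val u)); first by rewrite -mW; apply: infix_map.
  exists (map val X), (map val Y); split; [|split; [|split]].
  - exact: map_ne0.
  - exact: map_ne0.
  - by rewrite eu map_cat.
  by apply: perm_map; apply: content_perm.
move=> x.
case: (sW (val x) (ltn_ord x)) => P [X [Y [hX hY e p]]].
exists (map (@inord n) X ++ map (@inord n) Y); split.
  apply/infixP; exists (map (@inord n) P), [::].
  by rewrite cats0 -[x]inord_val -map_rcons e !map_cat.
exists (map (@inord n) X), (map (@inord n) Y); split; [|split; [|split]].
- exact: map_ne0.
- exact: map_ne0.
- by [].
by apply: perm_content; apply: perm_map.
Qed.

Theorem proposition1 (n : nat) (hn : 0 < n) (w : word n) :
  minimal_crucial_S2 w ->
  ~ (exists a b c : 'I_n,
        [/\ a != b, a != c & b != c] /\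
        [/\ count_mem a w = 2, count_mem b w = 2 & count_mem c w = 2]).
Proof.
move=> [cw mw] [a [b [c [[ab ac bc] [ca cb cc]]]]].
have lb := lower cw (And3 ab ac bc) ca cb cc.
have n3 : 3 <= n.
  have := ltn_ord a; have := ltn_ord b; have := ltn_ord c.
  move: ab ac bc; rewrite -!(inj_eq (@ord_inj n)).
  move: (nat_of_ord a) (nat_of_ord b) (nat_of_ord c) => x y z; lia.
case: (construct n3) => W [sz aW fW sW].
move: hn w cw mw lb a b c ab ac bc ca cb cc aW sW n3 sz.
case: n => // n _ w cw mw lb _ _ _ _ _ _ _ _ _ aW sW n3 sz.
have cv := transfer aW fW sW.
have := mw _ cv; rewrite size_map sz.
move: lb; set N := size w => lb; set N2 := size w; lia.
Qed.
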